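(* There exist infinitely many finite groups $G$ whose prime graph $\Gamma_e(G)$ is a path with two edges (on three vertices) while the codegree graph $\Gamma(G)$ is a triangle.
   Context: For $\chi\in{\rm Irr}(G)$, ${\rm cod}(\chi)=|G:\ker\chi|/\chi(1)$. The codegree graph $\Gamma(G)$ has vertices the prime divisors of $|G|$, distinct $p,q$ adjacent iff $pq$ divides ${\rm cod}(\chi)$ for some $\chi\in{\rm Irr}(G)$. The prime graph $\Gamma_e(G)$ has the same vertices, distinct $p,q$ adjacent iff $G$ has an element of order divisible by $pq$. *)

(* Defs.v *)
From HB Require Import structures.
From mathcomp Require Import all_boot all_order all_algebra all_fingroup all_solvable all_field all_character.
Set Implicit Arguments. Unset Strict Implicit. Unset Printing Implicit Defensive.
Import GRing.Theory Num.Theory.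

Definition cod (gT : finGroupType) (G : {group gT}) (i : Iirr G) : algC :=
  ((#|G : cfker 'chi[G]_i|)%g%:R / 'chi[G]_i 1%g)%R.

Definition codeg_adj (gT : finGroupType) (G : {group gT}) (p q : nat) : Prop :=
  p != q /\ exists (i : Iirr G) (m : nat), cod i = (m%:R)%R /\ (p * q %| m)%N.

Definition prime_adj (gT : finGroupType) (G : {group gT}) (p q : nat) : Prop :=
  p != q /\ exists2 x, x \in G & (p * q %| #[x]%g)%N.

(* Main.v *)
Require Import Defs.
From mathcomp Require Import all_boot all_order all_algebra all_fingroup all_solvable all_field all_character.
From mathcomp Require Import zify.
Set Implicit Arguments. Unset Strict Implicit. Unset Printing Implicit Defensive.
Import GRing.Theory Num.Theory.

Section Pairs.
Variables gT1 gT2 : finGroupType.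
Lemma pair_expg (x : (gT1 * gT2)%type) k : (x ^+ k)%g = ((x.1 ^+ k)%g, (x.2 ^+ k)%g).
Proof. by case: x => a b; elim: k => [|k IH] //; rewrite !expgS IH. Qed.
Lemma order_fst (x : (gT1 * gT2)%type) : (#[x.1] %| #[x])%g%N.
Proof. by rewrite order_dvdn; have := congr1 fst (expg_order x); rewrite pair_expg /= => ->. Qed.
Lemma order_snd (x : (gT1 * gT2)%type) : (#[x.2] %| #[x])%g%N.
Proof. by rewrite order_dvdn; have := congr1 snd (expg_order x); rewrite pair_expg /= => ->. Qed.
Lemma order_pair_dvd (x : (gT1 * gT2)%type) : (#[x] %| #[x.1] * #[x.2])%g%N.
Proof.
rewrite order_dvdn pair_expg; apply/eqP.
by rewrite expgM expg_order expg1n mulnC expgM expg_order expg1n.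
Qed.
End Pairs.

Lemma primes_ok n : perm_eq (primes (60 * 3 ^ n.+1)) [:: 2; 3; 5].
Proof.
apply: uniq_perm => //; first exact: primes_uniq.
move=> p; rewrite mem_primes muln_gt0 expn_gt0 /= !inE.
apply/andP/idP => [[pp]|].
  rewrite Euclid_dvdM // (Euclid_dvdX _ _ pp) andbT (_ : 60 = 2 * 2 * 3 * 5) //.
  rewrite !Euclid_dvdM // !dvdn_prime2 //.
  by case/orP => [/orP[/orP[/orP[]|]|]|] /eqP ->.
by case/or3P => /eqP -> ; split => //; apply: dvdn_mulr.
Qed.
Section S1. Local Open Scope ring_scope.

Lemma L1 (gT : finGroupType) (K : {group gT}) :
  simple K -> ~~ abelian K -> #|K| = 60 ->
  exists i : Iirr K, cfker 'chi_i = 1%g /\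
    exists d : nat, ('chi_i 1%g = d%:R)%R /\ d \in [:: 2; 3; 6].
Proof.
move=> simK nabK cardK.
pose d (i : Iirr K) := Num.truncn ('chi_i 1%g).
have dK i : ((d i)%:R = 'chi_i 1%g)%R by rewrite /d truncnK // Cnat_irr1.
have ker1 (i : Iirr K) : i != 0 -> cfker 'chi_i = 1%g.
  move=> nz; case/simpleP: simK => _ /(_ [group of cfker 'chi[K]_i] (cfker_normal _)) [//|].
  by move=> kK; move: nz; rewrite -subGcfker /= kK subxx.
have dge2 (i : Iirr K) : i != 0 -> (2 <= d i)%N.
  move=> nz; have := dK i; case: (d i) => [|[|n]] // Hd.
    by move: (irr1_neq0 i); rewrite -Hd eqxx.
  have lin : 'chi[K]_i \is a linear_char by rewrite qualifE /= irr_char -Hd eqxx.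
  move: lin; rewrite lin_irr_der1 ker1 // subG1 => /eqP/derG1P ab.
  by rewrite ab in nabK.
have ddvd (i : Iirr K) : (d i %| 60)%N by have := dvd_irr1_cardG i; rewrite -dK cardK dvdC_nat.
have d0 : d 0 = 1%N.
  by apply/eqP; rewrite -(eqr_nat algC) dK irr0 cfun11.
have hsum : (\sum_i (d i) ^ 2 = 60)%N.
  have := irr_sum_square K; rewrite cardK => Hs.
  apply/eqP; rewrite -(eqr_nat algC) natr_sum -Hs; apply/eqP/eq_bigr => i _.
  by rewrite natrX dK.
have dle (i : Iirr K) : (d i ^ 2 <= 60)%N.
  rewrite -hsum (bigD1 i) //=; exact: leq_addr.
case: (boolP [exists i : Iirr K, (i != 0) && (d i \in [:: 2; 3; 6])]).
  case/existsP=> i /andP[nz di]; exists i; split; first exact: ker1.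
  by exists (d i); rewrite dK.
rewrite negb_exists => /forallP hall.
have d45 (i : Iirr K) : i != 0 -> (d i == 4) || (d i == 5).
  move=> nz; have := hall i; rewrite nz /= !inE.
  have := dge2 i nz; have := dle i; have := ddvd i.
  move: (d i) => n Hd Hle Hge Hn.
  have n8 : (n < 8)%N by rewrite ltnNge; apply/negP => h; move: Hle; rewrite leqNgt; apply/negP/negPn; apply: leq_trans (leq_mul h h).
  clear Hle; move: Hd Hge Hn; do 8! [case: n n8 => [|n] n8 //].
have hs2 : (\sum_(i : Iirr K) d i ^ 2 = 1 + (16 * \sum_(i : Iirr K | i != 0%R) (d i == 4 : nat) + 25 * \sum_(i : Iirr K | i != 0%R) (d i == 5 : nat)))%N.
  rewrite (bigD1 0%R) //= d0 !big_distrr -big_split /= exp1n; apply: congr1.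
  by apply: eq_bigr => i nz; case/orP: (d45 i nz) => /eqP ->.
move: hs2; rewrite hsum; lia.
Qed.
End S1.
Section S2. Local Open Scope group_scope.

Lemma L2 (a : {perm 'I_5}) : ~~ (10 %| #[a]%g)%N.
Proof.
apply/negP => h10.
have h5 : (5 %| #[a]%g)%N by apply: dvdn_trans h10.
have h2 : (2 %| #[a]%g)%N by apply: dvdn_trans h10.
have oa : (0 < #[a]%g)%N by apply: order_gt0.
have ordX p : (p %| #[a]%g)%N -> (0 < p)%N -> #[a ^+ (#[a]%g %/ p)]%g = p.
  move=> hp p0; rewrite orderXdiv ?dvdn_div //.
  case/dvdnP: hp => q hq; rewrite hq mulnK //.
  rewrite mulKn //; rewrite hq in oa; rewrite muln_gt0 in oa.
  by case/andP: oa.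
set b := a ^+ (#[a]%g %/ 5); set t := a ^+ (#[a]%g %/ 2).
have ob : #[b]%g = 5 by apply: ordX.
have ot : #[t]%g = 2 by apply: ordX.
have cbt : commute b t by apply: commuteX2.
have [y0 hy0] : exists y0, b y0 != y0.
  apply/existsP; apply: contraT; rewrite negb_exists => /forallP hb.
  have b1 : b = 1%g by apply/permP => y; rewrite perm1; apply/eqP; move: (hb y); rewrite negbK.
  by move: ob; rewrite b1 order1.
pose O := orbit 'P <[b]>%g y0.
have memO k : ((b ^+ k)%g y0 \in O).
  by rewrite /O -[X in X \in _]apermE; apply: mem_orbit; apply: mem_cycle.
have cO : #|O| = 5.
  have dO : (#|O| %| 5)%N by rewrite /O card_orbit (dvdn_trans (dvdn_indexg _ _)) // -orderE ob.
  have lO : (2 <= #|O|)%N.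
    have c2 : #|[set y0; b y0]| = 2 by rewrite cards2 eq_sym hy0.
    rewrite -[X in (X <= _)%N]c2.
    apply: subset_leq_card; apply/subsetP => z; rewrite !inE => /orP[]/eqP ->.
      by have := memO 0%N; rewrite expg0 perm1.
    by have := memO 1%N; rewrite expg1.
  have : (#|O| <= 5)%N by apply: dvdn_leq.
  move: dO lO; move: #|O| => n; do 6! [case: n => [|n] //].
have OT : O = setT by apply/eqP; rewrite eqEcard subsetT cardsT card_ord cO.
have inO z : exists k, z = (b ^+ k)%g y0.
  have : z \in O by rewrite OT inE.
  case/orbitP => g /cycleP [k ->] <-; by exists k.
have [k0 hk0] := inO (t y0).
have tb : t = (b ^+ k0)%g.
  apply/permP => z; have [m ->] := inO z.
  rewrite -permM -(commuteX m (commute_sym cbt)) permM hk0 -!permM -!expgD addnC.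
  done.
have : (#[t] %| #[b])%g%N by rewrite tb orderXdvd.
by rewrite ot ob.
Qed.
End S2.

Lemma cod_arith d e : d \in [:: 2; 3; 6] -> (3 %| e)%N ->
  [/\ (d %| 60 * e)%N, (2 * 3 %| 60 * e %/ d)%N, (3 * 5 %| 60 * e %/ d)%N & (2 * 5 %| 60 * e %/ d)%N].
Proof.
move=> hd /dvdnP [e' ->].
by rewrite !inE in hd; case/or3P: hd => /eqP ->; split; lia.
Qed.

Section S3. Local Open Scope ring_scope.
Lemma codeg_part (gT2 : finGroupType) (C : {group gT2}) n :
  abelian C -> #|C| = (3 ^ n.+1)%N ->
  let A := ('Alt_('I_5))%G in let G := setX_group A C in
  [/\ codeg_adj G 2 3, codeg_adj G 3 5 & codeg_adj G 2 5].
Proof.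
move=> abC cC A G.
have cA : #|A| = 60%N.
  have := @card_Alt 'I_5; rewrite card_ord => /(_ isT) h.
  have h' : (2 * #|A| = 2 * 60)%N by rewrite h.
  by apply/eqP; rewrite -(eqn_pmul2l (isT : 0 < 2)%N) h'.
have cG : #|G| = (60 * 3 ^ n.+1)%N by rewrite /= cardsX cA cC.
pose K := setX_group A (1%G : {group gT2}).
pose H := setX_group (1%G : {group {perm 'I_5}}) C.
have KxH : (K \x H)%g = G := setX_dprod A C.
have simA : simple A by apply: simple_Alt5; rewrite card_ord.
have nabA : ~~ abelian A.
  by apply/negP => /abelian_sol; rewrite solvable_AltF // card_ord.
have isoK : (A \isog K)%g by exact: isog_setX1.
have simK : simple K by rewrite -(isog_simple isoK).
have nabK : ~~ abelian K by rewrite -(isog_abelian isoK).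
have cK : #|K| = 60 by rewrite -(card_isog isoK).
have [i [keri [d [Hd dmem]]]] := L1 simK nabK cK.
have isoH : (C \isog H)%g by exact: isog_set1X.
have abH : abelian H.
  by rewrite -(isog_abelian isoH).
have cH : #|H| = (3 ^ n.+1)%N by rewrite cardsX cards1 mul1n cC.
have NH : (1 < Nirr H)%N.
  by rewrite NirrE classes_gt1 -cardG_gt1 cH expnS; have := expn_gt0 3 n; lia.
pose j : Iirr H := Ordinal NH.
have jnz : j != 0 by [].
have /char_abelianP linH := abH.
have lj : 'chi_j 1%g = 1 := lin_char1 (linH j).
pose k := dprod_Iirr KxH (i, j).
have chik : 'chi_k = cfDprod KxH 'chi_i 'chi_j := dprod_IirrE KxH i j.
have psi1 : 'chi_k 1%g = d%:R by rewrite chik cfDprod1 lj mulr1.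
have [nKG nHG] := dprod_normal2 KxH.
have nK0G : (cfker 'chi_k <| G)%g := cfker_normal _.
have K0K : cfker 'chi_k :&: K = 1%g.
  apply/trivgP/subsetP => y /setIP [yK0 yK].
  suff : y \in cfker 'chi_i by rewrite keri.
  rewrite (cfkerEirr i) inE; move/cfker1: yK0 => yK0.
  have e1 : 'chi_k (y * 1)%g = 'chi_i y * 'chi_j 1%g by rewrite chik cfDprodE.
  by move: e1 yK0; rewrite mulg1 lj mulr1 psi1 Hd => -> ->.
have K0sH : cfker 'chi_k \subset H.
  have : ([~: cfker 'chi_k, K] \subset cfker 'chi_k :&: K)%g.
    apply: commg_subI.
      by rewrite subsetI subxx (subset_trans (normal_sub nK0G) (normal_norm nKG)).
    by rewrite subsetI subxx (subset_trans (normal_sub nKG) (normal_norm nK0G)).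
  rewrite K0K subG1 => /eqP /commG1P cK0K.
  apply/subsetP => -[a c] xK0.
  have := subsetP (normal_sub nK0G) _ xK0; rewrite in_setX => /andP[aA cC'].
  rewrite in_setX cC' andbT.
  have aZ : a \in 'Z(A)%g.
    rewrite inE aA /=; apply/centP => b bA.
    have bK : (b, 1%g) \in K by rewrite in_setX bA group1.
    have hc := centP (subsetP cK0K _ xK0) _ bK.
    have h1 := congr1 fst hc; rewrite /= in h1; first [exact: h1 | exact: (esym h1)].
  have ZA : 'Z(A)%g = 1%g.
    case/simpleP: simA => _ /(_ [group of 'Z(A)%g] (center_normal A)) [//|ZA].
    by case/negP: nabA; apply/center_idP.
  by rewrite ZA in aZ.
have K0H : ~~ (H \subset cfker 'chi_k).
  apply/negP => HK0.
  have : H \subset cfker 'chi_j.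
    apply/subsetP => h hH; have := cfker1 (subsetP HK0 _ hH).
    rewrite (cfkerEirr j) inE => hk.
    have e1 : 'chi_k (1 * h)%g = 'chi_i 1%g * 'chi_j h by rewrite chik cfDprodE.
    rewrite mul1g in e1; move: hk; rewrite e1 psi1 lj -Hd -{2}(mulr1 ('chi_i 1%g)) => hk.
    by rewrite -(inj_eq (mulfI (irr1_neq0 i))) hk.
  by rewrite subGcfker (negbTE jnz).
have he : (3 %| #|H : cfker 'chi_k|%g)%N.
  have : (#|H : cfker 'chi_k|%g %| 3 ^ n.+1)%N by rewrite -cH; exact: dvdn_indexg.
  case/dvdn_pfactor => // m _; case: m => [|m] em.
    by move/eqP: em; rewrite indexg_eq1 (negbTE K0H).
  by rewrite em expnS dvdn_mulr.
have hidx : #|G : cfker 'chi_k|%g = (60 * #|H : cfker 'chi_k|%g)%N.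
  rewrite -(Lagrange_index (normal_sub nHG) K0sH); congr (_ * _)%N.
  have := Lagrange (normal_sub nHG); rewrite cG cH => hL.
  by apply/eqP; rewrite -(eqn_pmul2l (expn_gt0 3 n.+1)) hL mulnC.
have [dv c6 c15 c10] := cod_arith dmem he.
have codk : cod k = ((60 * #|H : cfker 'chi_k|%g) %/ d)%:R.
  by rewrite /cod hidx psi1 natf_div.
by split; split => //; exists k, ((60 * #|H : cfker 'chi_k|%g) %/ d)%N.
Qed.
End S3.

Theorem mainTheorem8 :
  forall n : nat, exists (gT : finGroupType) (G : {group gT}),
    (n < #|G|)%N /\
    exists p q r : nat,
      [/\ uniq [:: p; q; r], perm_eq (primes #|G|) [:: p; q; r],
          [/\ prime_adj G p q, prime_adj G q r & ~ prime_adj G p r] &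
          [/\ codeg_adj G p q, codeg_adj G q r & codeg_adj G p r]].
Proof.
move=> n.
pose A := ('Alt_('I_5))%G.
pose C := (Zp (3 ^ n.+1))%G.
pose G := setX_group A C.
have cA : #|A| = 60.
  have := @card_Alt 'I_5; rewrite card_ord => /(_ isT) h.
  have h' : (2 * #|A| = 2 * 60)%N by rewrite h.
  by apply/eqP; rewrite -(eqn_pmul2l (isT : 0 < 2)%N) h'.
have cC : #|C| = (3 ^ n.+1)%N by rewrite card_Zp // expn_gt0.
have cG : #|G| = (60 * 3 ^ n.+1)%N by rewrite /= cardsX cA cC.
exists _, G; split.
  rewrite cG; have := ltn_expl n (isT : 1 < 3)%N; rewrite expnS; lia.
exists 2, 3, 5; split => //; first by rewrite cG primes_ok.
- have d2 : (2 %| #|A|)%N by rewrite cA.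
  have d5 : (5 %| #|A|)%N by rewrite cA.
  have d3 : (3 %| #|C|)%N by rewrite cC expnS dvdn_mulr.
  have [a2 a2A oa2] := @Cauchy _ 2 A isT d2.
  have [a5 a5A oa5] := @Cauchy _ 5 A isT d5.
  have [c3 c3C oc3] := @Cauchy _ 3 C isT d3.
  split.
  + split => //; exists (a2, c3); first by rewrite in_setX a2A c3C.
    rewrite Gauss_dvd //; apply/andP; split.
      by apply: (dvdn_trans _ (order_fst (a2, c3))); rewrite /= oa2.
    by apply: (dvdn_trans _ (order_snd (a2, c3))); rewrite /= oc3.
  + split => //; exists (a5, c3); first by rewrite in_setX a5A c3C.
    rewrite Gauss_dvd //; apply/andP; split.
      by apply: (dvdn_trans _ (order_snd (a5, c3))); rewrite /= oc3.
    by apply: (dvdn_trans _ (order_fst (a5, c3))); rewrite /= oa5.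
  + case=> _ [[a c]]; rewrite in_setX => /andP[aA cC'] h10.
    have h : (10 %| #[a]%g * #[c]%g)%N := dvdn_trans h10 (order_pair_dvd (a, c)).
    have cop : coprime 10 #[c]%g.
      apply: (coprime_dvdr (order_dvdG cC')); rewrite cC; exact: coprimeXr.
    by move: h; rewrite Gauss_dvdl // (negbTE (L2 a)).
- have := @codeg_part _ C n (abelianS (subsetT _) (Zp_abelian _)) cC; exact.
Qed.
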